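(* Let $G$ be a connected graph and let $v \in V(G)$. Then (1) $\left\lceil \frac{\tau(G)+1}{2} \right\rceil \le \tau(v) \le \tau(G)$; (2) there are at most $\left\lceil \frac{\tau(G)}{2} \right\rceil$ distinct terms in the detour sequence of $G$.
   Context: All graphs are finite and simple. The order of a path is its number of vertices. For a vertex $v$ of a graph $G$, the detour order $\tau(v)=\tau_G(v)$ is the order of a longest path in $G$ having $v$ as an endvertex. The detour order $\tau(G)$ of $G$ is the maximum of $\tau(v)$ over $v\in V(G)$, i.e. the order of a longest path in $G$. The detour sequence of $G$ is the nondecreasing sequence formed by the values $\tau(v)$, $v \in V(G)$ (one term per vertex). *)

(* Defs.v *)
From mathcomp Require Import all_boot.
Set Implicit Arguments. Unset Strict Implicit. Unset Printing Implicit Defensive.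

Definition simple_graph (T : finType) (e : rel T) : Prop :=
  symmetric e /\ irreflexive e.

Definition connected_graph (T : finType) (e : rel T) : Prop :=
  forall x y : T, connect e x y.

(* A path (list of vertices, pairwise distinct, consecutive ones adjacent),
   nonempty; its order is its number of vertices (size). *)
Definition is_gpath (T : finType) (e : rel T) (s : seq T) : bool :=
  match s with
  | [::] => false
  | x :: s' => path e x s' && uniq s
  end.

Definition has_endvertex (T : finType) (v : T) (s : seq T) : bool :=
  match s with
  | [::] => false
  | x :: s' => (x == v) || (last x s' == v)
  end.

(* tau(v): the order of a longest path having v as an endvertex.
   Paths have at most #|T| vertices, so we maximise over orders n <= #|T|. *)
Definition detour_v (T : finType) (e : rel T) (v : T) : nat :=
  \max_(n < #|T|.+1 | [exists t : n.-tuple T,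
                         is_gpath e t && has_endvertex v t]) n.

Definition detour_order (T : finType) (e : rel T) : nat :=
  \max_(n < #|T|.+1 | [exists t : n.-tuple T, is_gpath e t]) n.

Definition detour_sequence (T : finType) (e : rel T) : seq nat :=
  sort leq [seq detour_v e x | x <- enum T].

Definition num_distinct (s : seq nat) : nat := size (undup s).

(* Main.v *)
Require Import Defs.
From mathcomp Require Import all_boot zify.
Set Implicit Arguments. Unset Strict Implicit.

Section S.
Variables (T : finType) (e : rel T).

Lemma gpath_size (s : seq T) : is_gpath e s -> size s <= #|T|.
Proof.
case: s => [|x s] // /andP[_ u].
by rewrite -(card_uniqP u) max_card.
Qed.

Lemma dv_ge (v : T) (s : seq T) : is_gpath e s -> has_endvertex v s ->
  size s <= detour_v e v.
Proof.
move=> g h; have lt : size s < #|T|.+1 by rewrite ltnS gpath_size.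
rewrite /detour_v.
apply: (@leq_bigmax_cond _ _ (fun n : 'I_#|T|.+1 => nat_of_ord n) (Ordinal lt)).
by apply/existsP; exists (in_tuple s); rewrite g h.
Qed.

Lemma dv_le (v : T) : detour_v e v <= detour_order e.
Proof.
apply/bigmax_leqP => i /existsP[t /andP[g _]].
apply: (@leq_bigmax_cond _ _ (fun n : 'I_#|T|.+1 => nat_of_ord n) i).
by apply/existsP; exists t.
Qed.

Lemma longest (v : T) : exists x p, [/\ path e x p, uniq (x :: p) &
   size (x :: p) = detour_order e].
Proof.
have lt : 1 < #|T|.+1 by rewrite ltnS; apply/card_gt0P; exists v.
pose P := fun n : 'I_#|T|.+1 => [exists t : n.-tuple T, is_gpath e t].
have P0 : P (Ordinal lt).
  by apply/existsP; exists (in_tuple [:: v]).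
rewrite /detour_order (@bigmax_eq_arg _ (Ordinal lt) P (fun n => nat_of_ord n) P0).
case: arg_maxnP => // i /existsP[t g] _.
move: g; case: t => [[|x p] /= /eqP sz] // /andP[pa u].
by exists x, p; split => //; rewrite /= sz.
Qed.


Lemma reach_aux (P : seq T) p : forall v, path e v p -> last v p \in P ->
  exists q, [/\ path e v q, last v q \in P &
     forall z, z \in belast v q -> z \notin P].
Proof.
elim: p => [|y p IH] v /=.
  by move=> _ h; exists [::].
move=> /andP[evy pa] l.
case vP: (v \in P); first by exists [::]; split.
have [q [pq lq hq]] := IH y pa l.
exists (y :: q); split => //=; first by rewrite evy.
by move=> z; rewrite in_cons => /orP[/eqP ->|]; [rewrite vP|apply: hq].
Qed.

Lemma reach (P : seq T) u0 v : u0 \in P -> connect e v u0 ->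
  exists q, [/\ path e v q, uniq (v :: q), last v q \in P &
     forall z, z \in v :: q -> z \in P -> z = last v q].
Proof.
move=> u0P /connectP[p pa lp]; rewrite lp in u0P.
have [q [pq lq hq]] := reach_aux pa u0P.
have hq' : forall z, z \in v :: q -> z \in P -> z = last v q.
  move=> z; rewrite lastI mem_rcons in_cons => /orP[/eqP ->//|/hq].
  by move=> /negP.
move: lq hq'; case: (shortenP pq) => q' pq' uq' sub lq hq'.
exists q'; split => // z zq zP; apply: hq' => //.
by move: zq; rewrite !in_cons => /orP[->//|/sub ->]; rewrite orbT.
Qed.

Lemma glue v q u b : path e v q -> last v q = u -> path e u b ->
  uniq (v :: q) -> uniq (u :: b) ->
  (forall z, z \in v :: q -> z \in b -> z = u) ->
  size q + size b < detour_v e v.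
Proof.
move=> pq lq pb uq ub H.
have -> : (size q + size b).+1 = size (v :: q ++ b) by rewrite /= size_cat.
apply: dv_ge; last by rewrite /= eqxx.
apply/andP; split; first by rewrite cat_path lq pb pq.
rewrite -[uniq _]/(uniq ((v :: q) ++ b)) cat_uniq uq /=; move: ub => /= /andP[ub1 ->].
rewrite andbT; apply/hasPn => z zb; apply/negP => zq.
by move: ub1; rewrite -(H z zq zb) zb.
Qed.

Lemma part1 v : simple_graph e -> connected_graph e ->
  (detour_order e).+2./2 <= detour_v e v <= detour_order e.
Proof.
move=> [sym irr] con; rewrite dv_le andbT.
have [x [p [pa up <-]]] := longest v.
have [q [pq uq uP hq]] := reach (mem_head x p) (con v x).
move: uP hq; set u := last v q => uP hq.
case/splitPl: uP pa up hq => p1 p2 lp1.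
rewrite cat_path lp1 => /andP[pa1 pa2].
rewrite -cat_cons lastI lp1 cat_rcons => U hq.
have U2 : uniq (u :: p2) by move: U; rewrite cat_uniq => /and3P[_ _ ->].
have U1 : uniq (u :: rev (belast x p1)).
  move: U; rewrite -cat_rcons cat_uniq => /and3P[+ _ _].
  by rewrite -rev_uniq rev_rcons.
have memP z : z \in x :: p1 ++ p2 = (z \in belast x p1 ++ u :: p2).
  by rewrite -cat_cons lastI lp1 cat_rcons.
have A := glue pq erefl pa2 uq U2.
have B : size q + size (rev (belast x p1)) < detour_v e v.
  apply: glue pq erefl _ uq U1 _.
    rewrite -/u -lp1 rev_path.
    by rewrite (@eq_path _ (fun z y => e y z) e) // => a b; rewrite sym.
  move=> z zq; rewrite mem_rev => zb; apply: hq => //.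
  by rewrite mem_cat zb.
have {}A : size q + size p2 < detour_v e v.
  apply: A => z zq zb; apply: hq => //.
  by rewrite mem_cat in_cons zb !orbT.
move: B; rewrite size_rev size_belast size_cat /= => B.
rewrite size_belast -divn2.
set N := _ + _; have h1 := divn_eq N 2; have h2 : N %% 2 < 2 by rewrite ltn_mod.
rewrite /N in h1 h2 *. move: A B h1 h2. set D := detour_v _ _. set a := size q. set b:= size p1. set c := size p2. move=> A B h1 h2. move: h1 h2; set Q := _ %/ 2; set R := _ %% 2; move=> h1 h2; lia.
Qed.
End S.

Theorem lemma1p4 (T : finType) (e : rel T) (v : T) :
  simple_graph e -> connected_graph e ->
  ((detour_order e).+2./2 <= detour_v e v <= detour_order e) /\
  num_distinct (detour_sequence e) <= (detour_order e).+1./2.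
Proof.
move=> sg con; split; first exact: part1.
set t := detour_order e; set lo := t.+2./2.
have -> : t.+1./2 = size (iota lo (t.+1 - lo)).
  rewrite size_iota /lo -!divn2.
  set N := t.+2; have h1 := divn_eq N 2; have h2 : N %% 2 < 2 by rewrite ltn_mod.
  have h3 := divn_eq t.+1 2; have h4 : t.+1 %% 2 < 2 by rewrite ltn_mod.
  rewrite /N in h1 h2 *; move: h1 h2 h3 h4.
  set Q := _ %/ 2; set R := _ %% 2; set Q' := _ %/ 2; set R' := _ %% 2; lia.
apply: uniq_leq_size; first exact: undup_uniq.
move=> z; rewrite mem_undup mem_sort => /mapP[y _ ->].
have /andP[h1 h2] := part1 y sg con.
rewrite mem_iota h1 /=; rewrite -/t in h2 *; rewrite -/lo in h1 *. lia.
Qed.
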